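(* Let $\ell^1$ be the Banach space of complex sequences $a=(a(n))_{n\ge1}$ with $\|a\|=\sum_n|a(n)|<\infty$, equipped with the product $(a*b)(1)=a(1)b(1)$ and $(a*b)(n)=a(1)b(n)+b(1)a(n)+a(n)b(n)$ for $n>1$. Its character space is $\{\phi_1\}\cup\{\phi_1+\phi_n:n>1\}$ where $\phi_n(a)=a(n)$. Then $\ell^1$ is neither left $\phi_1$-amenable nor $\phi_1$-biflat, but $\ell^1$ is approximately left character biprojective.
   Context: For a Banach algebra $A$ and character $\phi$: $A$ is left $\phi$-amenable if there is a bounded net $(a_\alpha)$ in $A$ with $\|aa_\alpha-\phi(a)a_\alpha\|\to0$ for all $a$ and $\phi(a_\alpha)\to1$. $A\otimes_pA$ is the projective tensor product with $a\cdot(b\otimes c)=ab\otimes c$, $(b\otimes c)\cdot a=b\otimes ca$, $\pi_A(a\otimes b)=ab$; $\tilde\phi(F)=F(\phi)$ for $F\in A^{**}$. $A$ is $\phi$-biflat if there is a bounded $A$-bimodule morphism $\rho:A\to(A\otimes_pA)^{**}$ with $\tilde\phi(\pi_A^{**}(\rho(a)))=\phi(a)$ for all $a$. $A$ is approximately left $\phi$-biprojective if there is a net $(\rho_\alpha)$ of bounded linear maps $A\to A\otimes_pA$ such that for all $a,x\in A$: $\|a\cdot\rho_\alpha(x)-\rho_\alpha(ax)\|\to0$, $\|\rho_\alpha(xa)-\phi(a)\rho_\alpha(x)\|\to0$, $\phi(\pi_A(\rho_\alpha(x)))-\phi(x)\to0$; approximately left character biprojective means this holds for every character. *)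

(* Defs.v *)
From Stdlib Require Import Reals ClassicalEpsilon.
Open Scope R_scope.

Record C : Type := mkC { re : R ; im : R }.
Definition C0 : C := mkC 0 0.
Definition C1 : C := mkC 1 0.
Definition Cadd (z w : C) : C := mkC (re z + re w) (im z + im w).
Definition Copp (z : C) : C := mkC (- re z) (- im z).
Definition Csub (z w : C) : C := Cadd z (Copp w).
Definition Cmul (z w : C) : C :=
  mkC (re z * re w - im z * im w) (re z * im w + im z * re w).
Definition Cnorm (z : C) : R := sqrt (re z * re z + im z * im z).

Definition rseries (f : nat -> R) : R :=
  epsilon (inhabits 0) (fun l => Un_cv (fun N => sum_f_R0 f N) l).
Definition csum (f : nat -> C) : C :=
  mkC (rseries (fun n => re (f n))) (rseries (fun n => im (f n))).

(* ---------- the sequence space l^1 (index 0 plays the role of n = 1) ---------- *)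
Definition seqC := nat -> C.
Definition l1 (a : seqC) : Prop :=
  exists M, forall N, sum_f_R0 (fun n => Cnorm (a n)) N <= M.
Definition l1norm (a : seqC) : R :=
  epsilon (inhabits 0)
    (is_lub (fun r => exists N, r = sum_f_R0 (fun n => Cnorm (a n)) N)).
Definition sadd (a b : seqC) : seqC := fun n => Cadd (a n) (b n).
Definition ssub (a b : seqC) : seqC := fun n => Csub (a n) (b n).
Definition sscal (c : C) (a : seqC) : seqC := fun n => Cmul c (a n).
Definition delta (m : nat) : seqC := fun n => if Nat.eqb n m then C1 else C0.

Definition lmul (a b : seqC) : seqC := fun n =>
  match n with
  | O => Cmul (a O) (b O)
  | S _ => Cadd (Cadd (Cmul (a O) (b n)) (Cmul (b O) (a n))) (Cmul (a n) (b n))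
  end.

Definition functional := seqC -> C.
Definition character (phi : functional) : Prop :=
  (forall a b, l1 a -> l1 b -> phi (sadd a b) = Cadd (phi a) (phi b)) /\
  (forall c a, l1 a -> phi (sscal c a) = Cmul c (phi a)) /\
  (forall a b, l1 a -> l1 b -> phi (lmul a b) = Cmul (phi a) (phi b)) /\
  (exists K, forall a, l1 a -> Cnorm (phi a) <= K * l1norm a) /\
  (exists a, l1 a /\ phi a <> C0).
Definition phin (n : nat) : functional := fun a => a n.
Definition agree (phi psi : functional) : Prop := forall a, l1 a -> phi a = psi a.

Definition directed (D : Type) (le : D -> D -> Prop) : Prop :=
  inhabited D /\ (forall i, le i i) /\
  (forall i j k, le i j -> le j k -> le i k) /\
  (forall i j, exists k, le i k /\ le j k).
Definition net_to0 {D : Type} (le : D -> D -> Prop) (f : D -> R) : Prop :=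
  forall eps, eps > 0 -> exists i0, forall i, le i0 i -> Rabs (f i) < eps.

Definition left_phi_amenable (phi : functional) : Prop :=
  exists (D : Type) (le : D -> D -> Prop) (x : D -> seqC),
    directed D le /\
    (exists K, forall i, l1 (x i) /\ l1norm (x i) <= K) /\
    (forall a, l1 a ->
       net_to0 le (fun i => l1norm (ssub (lmul a (x i)) (sscal (phi a) (x i))))) /\
    net_to0 le (fun i => Cnorm (Csub (phi (x i)) C1)).

(* ---------- projective tensor product l^1 (x)_p l^1, modelled as l^1(N x N)
   via the isometric identification delta_m (x) delta_n <-> e_(m,n) ---------- *)
Definition tens := nat -> nat -> C.
Definition sq_sum (u : tens) (N : nat) : R :=
  sum_f_R0 (fun m => sum_f_R0 (fun n => Cnorm (u m n)) N) N.
Definition l1T (u : tens) : Prop := exists M, forall N, sq_sum u N <= M.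
Definition normT (u : tens) : R :=
  epsilon (inhabits 0) (is_lub (fun r => exists N, r = sq_sum u N)).
Definition tsub (u v : tens) : tens := fun m n => Csub (u m n) (v m n).
Definition tadd (u v : tens) : tens := fun m n => Cadd (u m n) (v m n).
Definition tscal (c : C) (u : tens) : tens := fun m n => Cmul c (u m n).
(* a.(b (x) c) = ab (x) c ;  (b (x) c).a = b (x) ca *)
Definition tlact (a : seqC) (u : tens) : tens := fun m n => lmul a (fun p => u p n) m.
Definition tract (u : tens) (a : seqC) : tens := fun m n => lmul (u m) a n.
(* pi(b (x) c) = bc, extended continuously: pi(u) = sum u(m,n) delta_m * delta_n *)
Definition piA (u : tens) : seqC := fun k =>
  csum (fun m => csum (fun n => Cmul (u m n) (lmul (delta m) (delta n) k))).

(* ---------- bidual (l^1 (x)_p l^1)^** = (l^oo(N x N))^* ---------- *)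
Definition boundedT (g : tens) (c : R) : Prop := forall m n, Cnorm (g m n) <= c.
(* dual actions on (A (x)_p A)^* = l^oo(N x N):  <u, g.a> = <a.u, g>, <u, a.g> = <u.a, g> *)
Definition dual_ract (g : tens) (a : seqC) : tens := fun m n =>
  csum (fun p => Cmul (lmul a (delta m) p) (g p n)).
Definition dual_lact (a : seqC) (g : tens) : tens := fun m n =>
  csum (fun p => Cmul (lmul (delta n) a p) (g m p)).
Definition bidual := tens -> C.
Definition bid_lact (a : seqC) (F : bidual) : bidual := fun g => F (dual_ract g a).
Definition bid_ract (F : bidual) (a : seqC) : bidual := fun g => F (dual_lact a g).
Definition bid_eq (F G : bidual) : Prop := forall g c, boundedT g c -> F g = G g.
(* pi^*(phi) as an element of (A (x)_p A)^*, evaluated on delta_m (x) delta_n *)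
Definition pistar (phi : functional) : tens := fun m n => phi (lmul (delta m) (delta n)).

Definition phi_biflat (phi : functional) : Prop :=
  exists rho : seqC -> bidual,
    (forall a, l1 a ->
       (forall g h c d, boundedT g c -> boundedT h d ->
          rho a (tadd g h) = Cadd (rho a g) (rho a h)) /\
       (forall z g c, boundedT g c -> rho a (tscal z g) = Cmul z (rho a g))) /\
    (forall a b, l1 a -> l1 b -> bid_eq (rho (sadd a b)) (fun g => Cadd (rho a g) (rho b g))) /\
    (forall z a, l1 a -> bid_eq (rho (sscal z a)) (fun g => Cmul z (rho a g))) /\
    (exists K, forall a g c, l1 a -> boundedT g c -> Cnorm (rho a g) <= K * l1norm a * c) /\
    (forall a b, l1 a -> l1 b -> bid_eq (rho (lmul a b)) (bid_lact a (rho b))) /\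
    (forall a b, l1 a -> l1 b -> bid_eq (rho (lmul a b)) (bid_ract (rho a) b)) /\
    (* phi~(pi^**(rho a)) = rho a (pi^* phi) = phi a *)
    (forall a, l1 a -> rho a (pistar phi) = phi a).

Definition approx_left_phi_biprojective (phi : functional) : Prop :=
  exists (D : Type) (le : D -> D -> Prop) (rho : D -> seqC -> tens),
    directed D le /\
    (forall i,
       (forall x, l1 x -> l1T (rho i x)) /\
       (forall x y, l1 x -> l1 y -> rho i (sadd x y) = tadd (rho i x) (rho i y)) /\
       (forall z x, l1 x -> rho i (sscal z x) = tscal z (rho i x)) /\
       (exists K, forall x, l1 x -> normT (rho i x) <= K * l1norm x)) /\
    (forall a x, l1 a -> l1 x ->
       net_to0 le (fun i => normT (tsub (tlact a (rho i x)) (rho i (lmul a x)))) /\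
       net_to0 le (fun i => normT (tsub (rho i (lmul x a)) (tscal (phi a) (rho i x)))) /\
       net_to0 le (fun i => Cnorm (Csub (phi (piA (rho i x))) (phi x)))).

Definition approx_left_character_biprojective : Prop :=
  forall phi, character phi -> approx_left_phi_biprojective phi.

(* Main.v *)
Require Import Defs.
From Stdlib Require Import Reals ClassicalEpsilon Lra Lia FunctionalExtensionality Classical.
Open Scope R_scope.
Import Defs.

Lemma Cext (z w : C) : re z = re w -> im z = im w -> z = w.
Proof. destruct z, w; simpl; intros; subst; reflexivity. Qed.

Ltac Cring := apply Cext; simpl; ring.

Lemma Cnorm_ge0 z : 0 <= Cnorm z.
Proof. apply sqrt_pos. Qed.

Lemma Cnorm_C0 : Cnorm C0 = 0.
Proof. unfold Cnorm; simpl. replace (0*0+0*0) with 0 by ring. apply sqrt_0. Qed.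

Lemma Cnorm_C1 : Cnorm C1 = 1.
Proof. unfold Cnorm; simpl. replace (1*1+0*0) with 1 by ring. apply sqrt_1. Qed.

Lemma Cnorm_mul z w : Cnorm (Cmul z w) = Cnorm z * Cnorm w.
Proof.
  unfold Cnorm; simpl. rewrite <- sqrt_mult by nra. f_equal. ring.
Qed.

Lemma Cnorm_opp z : Cnorm (Copp z) = Cnorm z.
Proof. unfold Cnorm; simpl. f_equal. ring. Qed.

Lemma Cnorm_triangle z w : Cnorm (Cadd z w) <= Cnorm z + Cnorm w.
Proof.
  unfold Cnorm; simpl. destruct z as [a b], w as [c d]; simpl.
  set (s1 := sqrt (a*a+b*b)). set (s2 := sqrt (c*c+d*d)).
  assert (h1 : s1 * s1 = a*a+b*b) by (apply sqrt_sqrt; nra).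
  assert (h2 : s2 * s2 = c*c+d*d) by (apply sqrt_sqrt; nra).
  assert (p1 : 0 <= s1) by apply sqrt_pos. assert (p2 : 0 <= s2) by apply sqrt_pos.
  assert (cs : a*c+b*d <= s1*s2).
  { assert (0 <= s1*s2) by (apply Rmult_le_pos; lra).
    destruct (Rle_dec (a*c+b*d) 0). lra.
    assert ((a*c+b*d)*(a*c+b*d) <= (s1*s2)*(s1*s2)).
    { replace ((s1*s2)*(s1*s2)) with ((s1*s1)*(s2*s2)) by ring. rewrite h1, h2.
      assert (0 <= (a*d-b*c)*(a*d-b*c)) by apply Rle_0_sqr.
      replace ((a*a+b*b)*(c*c+d*d)) with ((a*c+b*d)*(a*c+b*d) + (a*d-b*c)*(a*d-b*c)) by ring.
      lra. }
    nra. }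
  rewrite <- (sqrt_square (s1+s2)) by lra. apply sqrt_le_1_alt. nra.
Qed.

Lemma Cnorm_eq0 z : Cnorm z = 0 -> z = C0.
Proof.
  unfold Cnorm; intro h. apply sqrt_eq_0 in h; [|nra].
  destruct z as [a b]; simpl in *. apply Cext; simpl; nra.
Qed.

Lemma Cmul_integral z w : Cmul z w = C0 -> z = C0 \/ w = C0.
Proof.
  intro h. destruct (classic (w = C0)) as [e|n]; [right; exact e|left].
  assert (Cnorm (Cmul z w) = 0) by (rewrite h; apply Cnorm_C0).
  rewrite Cnorm_mul in H.
  assert (Cnorm w <> 0) by (intro e; apply n, Cnorm_eq0, e).
  apply Cnorm_eq0. apply Rmult_integral in H. destruct H; tauto.
Qed.

Lemma Cnorm_sub_tri z w : Cnorm z <= Cnorm w + Cnorm (Csub z w).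
Proof.
  replace z with (Cadd w (Csub z w)) at 1 by Cring. apply Cnorm_triangle.
Qed.

Lemma lub_of (s : nat -> R) M :
  (forall N, 0 <= s N <= M) ->
  let r := epsilon (inhabits 0) (is_lub (fun r => exists N, r = s N)) in
  0 <= r <= M /\ forall N, s N <= r.
Proof.
  intros hs r.
  assert (ex : exists m, is_lub (fun r => exists N, r = s N) m).
  { destruct (completeness (fun r => exists N, r = s N)) as [m hm].
    - exists M. intros x [N ->]. apply hs.
    - exists (s 0%nat). eauto.
    - eauto. }
  pose proof (@epsilon_spec _ (inhabits 0) _ ex) as [ub lub]. fold r in ub, lub.
  assert (hN : forall N, s N <= r) by (intro N; apply ub; eauto).
  split; [split|exact hN].
  - specialize (hN 0%nat). specialize (hs 0%nat). lra.
  - apply lub. intros x [N ->]. apply hs.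
Qed.

Lemma sum_nonneg (f : nat -> R) N : (forall k, 0 <= f k) -> 0 <= sum_f_R0 f N.
Proof. intro h; induction N; simpl; [apply h|specialize (h (S N)); lra]. Qed.

Lemma sum_le (f g : nat -> R) N : (forall k, f k <= g k) -> sum_f_R0 f N <= sum_f_R0 g N.
Proof. intro h; induction N; simpl; [apply h|specialize (h (S N)); lra]. Qed.

Lemma sum_mono (f : nat -> R) N M : (forall k, 0 <= f k) -> (N <= M)%nat -> sum_f_R0 f N <= sum_f_R0 f M.
Proof.
  intros h le. induction le; [lra|simpl; specialize (h (S m)); lra].
Qed.

Lemma sum_term (f : nat -> R) k N : (forall k, 0 <= f k) -> (k <= N)%nat -> f k <= sum_f_R0 f N.
Proof.
  intros h le. induction le.
  - destruct k; simpl; [lra|]. pose proof (sum_nonneg f k h); lra.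
  - simpl. specialize (h (S m)); lra.
Qed.

Lemma sum_single (f : nat -> R) k : (forall n, n <> k -> f n = 0) ->
  forall N, (k <= N)%nat -> sum_f_R0 f N = f k.
Proof.
  intros h N le. induction le.
  - destruct k; simpl; [reflexivity|].
    rewrite (sum_eq_R0 f k). lra. intros n hn. apply h. lia.
  - simpl. rewrite IHle, (h (S m)) by lia. ring.
Qed.

Lemma sum_lin (f g : nat -> R) a b N : sum_f_R0 (fun k => a * f k + b * g k) N = a * sum_f_R0 f N + b * sum_f_R0 g N.
Proof. induction N; simpl; [ring|rewrite IHN; ring]. Qed.

Lemma rseries_single (f : nat -> R) k : (forall n, n <> k -> f n = 0) -> rseries f = f k.
Proof.
  intro h. unfold rseries.
  assert (cv : Un_cv (fun N => sum_f_R0 f N) (f k)).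
  { intros e he. exists k. intros n hn. rewrite (sum_single f k h n) by lia.
    unfold Rdist. rewrite Rminus_diag, Rabs_R0. lra. }
  pose proof (@epsilon_spec _ (inhabits 0) _ (ex_intro _ _ cv)) as c2.
  eapply UL_sequence; eauto.
Qed.

Lemma csum_single (f : nat -> C) k : (forall n, n <> k -> f n = C0) -> csum f = f k.
Proof.
  intro h. unfold csum. apply Cext; simpl.
  - apply (rseries_single (fun n => _ (f n)) k). intros n hn; rewrite (h n hn); reflexivity.
  - apply (rseries_single (fun n => _ (f n)) k). intros n hn; rewrite (h n hn); reflexivity.
Qed.

Definition psum (a : seqC) N := sum_f_R0 (fun n => Cnorm (a n)) N.

Lemma psum_ge0 a N : 0 <= psum a N.
Proof. apply sum_nonneg; intro; apply Cnorm_ge0. Qed.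

Lemma l1norm_spec a : l1 a -> 0 <= l1norm a /\ forall N, psum a N <= l1norm a.
Proof.
  intros [M hM]. destruct (lub_of (psum a) M) as [h1 h2].
  { intro N; split; [apply psum_ge0|apply hM]. }
  split; [exact (proj1 h1)|exact h2].
Qed.

Lemma l1norm_le a M : (forall N, psum a N <= M) -> l1norm a <= M.
Proof.
  intro hM. destruct (lub_of (psum a) M) as [h1 h2].
  { intro N; split; [apply psum_ge0|apply hM]. } exact (proj2 h1).
Qed.

Lemma l1norm_term a (k : nat) : l1 a -> Cnorm (a k) <= l1norm a.
Proof.
  intro h. destruct (l1norm_spec a h) as [_ h2]. eapply Rle_trans; [|apply (h2 k)].
  apply (sum_term (fun n => Cnorm (a n))); [intro; apply Cnorm_ge0|lia].
Qed.

Lemma l1_term a : l1 a -> exists M, forall n, Cnorm (a n) <= M.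
Proof. intro h. exists (l1norm a). intro; apply l1norm_term, h. Qed.

Lemma l1_comb (a c b : seqC) al be : 0 <= al -> 0 <= be ->
  (forall k, Cnorm (b k) <= al * Cnorm (a k) + be * Cnorm (c k)) -> l1 a -> l1 c -> l1 b.
Proof.
  intros h1 h2 hb [Ma ha] [Mc hc]. exists (al * Ma + be * Mc). intro N.
  eapply Rle_trans. apply (sum_le _ (fun k => al * Cnorm (a k) + be * Cnorm (c k)) N hb).
  rewrite sum_lin. specialize (ha N); specialize (hc N). nra.
Qed.

Lemma l1_dom (a b : seqC) : (forall k, Cnorm (b k) <= Cnorm (a k)) -> l1 a -> l1 b.
Proof.
  intros h ha. apply (l1_comb a a b 1 0); try lra; auto. intro k; specialize (h k); lra.
Qed.

Lemma l1_sadd a b : l1 a -> l1 b -> l1 (sadd a b).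
Proof.
  intros; apply (l1_comb a b _ 1 1); try lra; auto. intro k; unfold sadd.
  pose proof (Cnorm_triangle (a k) (b k)); lra.
Qed.

Lemma l1_sscal c a : l1 a -> l1 (sscal c a).
Proof.
  intros; apply (l1_comb a a _ (Cnorm c) 0); try lra; auto; [apply Cnorm_ge0|].
  intro k; unfold sscal. rewrite Cnorm_mul; lra.
Qed.

Lemma l1_lmul a b : l1 a -> l1 b -> l1 (lmul a b).
Proof.
  intros ha hb. destruct (l1_term a ha) as [Ma hMa].
  pose proof (Cnorm_ge0 (a 0%nat)). pose proof (Cnorm_ge0 (b 0%nat)).
  assert (0 <= Ma) by (specialize (hMa 0%nat); lra).
  apply (l1_comb b a _ (Cnorm (a 0%nat) + Ma) (Cnorm (b 0%nat))); try lra; auto.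
  intro k. pose proof (Cnorm_ge0 (a k)). pose proof (Cnorm_ge0 (b k)). specialize (hMa k).
  destruct k; simpl.
  - rewrite Cnorm_mul. nra.
  - eapply Rle_trans. apply Cnorm_triangle. eapply Rle_trans.
    apply Rplus_le_compat_r. apply Cnorm_triangle. rewrite !Cnorm_mul. nra.
Qed.

Lemma l1_fin a N : (forall k, (N < k)%nat -> a k = C0) -> l1 a.
Proof.
  intro h. exists (psum a N). intro M. destruct (Compare_dec.le_lt_dec M N).
  - apply sum_mono; [intro; apply Cnorm_ge0|lia].
  - induction l.
    + simpl. rewrite (h (S N)) by lia. rewrite Cnorm_C0. unfold psum; lra.
    + simpl. rewrite (h (S m)) by lia. rewrite Cnorm_C0. unfold psum in *; lra.
Qed.

Lemma l1_delta k : l1 (delta k).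
Proof. apply (l1_fin _ k). intros n hn. unfold delta. destruct (Nat.eqb_spec n k); [lia|auto]. Qed.

Definition tailsum (a : seqC) j N := sum_f_R0 (fun m => if Nat.leb m j then 0 else Cnorm (a m)) N.

Lemma tailsum_small a j N : (N <= j)%nat -> tailsum a j N = 0.
Proof.
  intro h; unfold tailsum. induction N; cbn [sum_f_R0].
  - reflexivity.
  - rewrite IHN by lia. destruct (Nat.leb_spec (S N) j); [ring|lia].
Qed.

Lemma tailsum_big a j N : (j <= N)%nat -> tailsum a j N = psum a N - psum a j.
Proof.
  intro h. induction h.
  - rewrite tailsum_small by lia. ring.
  - unfold tailsum in *; cbn [sum_f_R0]. rewrite IHh. destruct (Nat.leb_spec (S m) j); [lia|].
    unfold psum; simpl; ring.
Qed.

Lemma tail_small a : l1 a -> forall eps, eps > 0 -> exists i, forall j, (i <= j)%nat ->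
  forall N, tailsum a j N <= eps.
Proof.
  intros [M hM] eps he.
  assert (gr : Un_growing (psum a)).
  { intro n. unfold psum; simpl. pose proof (Cnorm_ge0 (a (S n))); lra. }
  destruct (growing_cv (psum a) gr) as [L hL]. { exists M. intros x [n ->]. apply hM. }
  destruct (hL eps he) as [i hi]. exists i. intros j hj N.
  destruct (Compare_dec.le_lt_dec N j).
  - rewrite tailsum_small by lia. lra.
  - rewrite tailsum_big by lia. specialize (hi j hj). unfold Rdist in hi.
    pose proof (growing_ineq _ _ gr hL N). pose proof (growing_ineq _ _ gr hL j).
    rewrite Rabs_left1 in hi by lra. lra.
Qed.

Lemma normT_le u M : (forall N, sq_sum u N <= M) -> 0 <= normT u <= M.
Proof.
  intro hM. destruct (lub_of (sq_sum u) M) as [h1 h2].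
  { intro N; split; [|apply hM]. unfold sq_sum. apply sum_nonneg; intro; apply sum_nonneg; intro; apply Cnorm_ge0. }
  exact h1.
Qed.

Lemma net_nat (f : nat -> R) : (forall eps, eps > 0 -> exists i0, forall i, (i0 <= i)%nat -> 0 <= f i <= eps) ->
  net_to0 le f.
Proof.
  intros h eps he. destruct (h (eps/2)) as [i0 hi]; [lra|]. exists i0. intros i hi'.
  specialize (hi i hi'). rewrite Rabs_right by lra. lra.
Qed.

Lemma sq_sum_col u N : (forall m n, n <> 0%nat -> Cnorm (u m n) = 0) ->
  sq_sum u N = sum_f_R0 (fun m => Cnorm (u m 0%nat)) N.
Proof.
  intro h. unfold sq_sum. apply sum_eq. intros m _.
  apply (sum_single (fun n => Cnorm (u m n)) 0). intros n hn; apply h, hn. lia.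
Qed.

Ltac dcases := repeat match goal with |- context [Nat.eqb ?a ?b] =>
  destruct (Nat.eqb_spec a b); try lia; try subst end.

Lemma Csub_eq0 z w : Csub z w = C0 -> z = w.
Proof. intro h. apply Cext; [apply (f_equal re) in h|apply (f_equal im) in h]; simpl in h; lra. Qed.

Lemma Cmul_cancel z w : Cmul z w = w -> w <> C0 -> z = C1.
Proof.
  intros h hw. apply Csub_eq0.
  assert (Cmul (Csub z C1) w = C0) by (replace (Cmul (Csub z C1) w) with (Csub (Cmul z w) w) by Cring; rewrite h; Cring).
  destruct (Cmul_integral _ _ H); tauto.
Qed.

Lemma lmul_e_l a : lmul (delta 0) a = a.
Proof. extensionality n. destruct n; unfold lmul, delta; cbv beta iota; dcases; Cring. Qed.

Lemma lmul_e_r a : lmul a (delta 0) = a.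
Proof. extensionality n. destruct n; unfold lmul, delta; cbv beta iota; dcases; Cring. Qed.

Lemma lmul_dd k : lmul (delta k) (delta k) = delta k.
Proof. extensionality n. destruct n; unfold lmul, delta; cbv beta iota; dcases; Cring. Qed.

Lemma lmul_a_dn a n : (0 < n)%nat -> lmul a (delta n) = sscal (Cadd (a 0%nat) (a n)) (delta n).
Proof.
  intro hn. extensionality k. destruct k; unfold lmul, delta, sscal; cbv beta iota; dcases; Cring.
Qed.

Lemma lmul_dn_a a n : (0 < n)%nat -> lmul (delta n) a = sscal (Cadd (a 0%nat) (a n)) (delta n).
Proof.
  intro hn. extensionality k. destruct k; unfold lmul, delta, sscal; cbv beta iota; dcases; Cring.
Qed.

Definition trunc N (a : seqC) : seqC := fun k => if Nat.leb k N then a k else C0.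
Definition tail N (a : seqC) : seqC := fun k => if Nat.leb k N then C0 else a k.

Lemma l1_trunc N a : l1 a -> l1 (trunc N a).
Proof. apply l1_dom. intro k; unfold trunc; destruct (Nat.leb k N); [lra|rewrite Cnorm_C0; apply Cnorm_ge0]. Qed.
Lemma l1_tail N a : l1 a -> l1 (tail N a).
Proof. apply l1_dom. intro k; unfold tail; destruct (Nat.leb k N); [rewrite Cnorm_C0; apply Cnorm_ge0|lra]. Qed.

Lemma split_at N a : a = sadd (trunc N a) (tail N a).
Proof. extensionality k. unfold sadd, trunc, tail. destruct (Nat.leb k N); Cring. Qed.

Lemma trunc0 a : trunc 0 a = sscal (a 0%nat) (delta 0).
Proof. extensionality k. unfold trunc, sscal, delta. destruct k; simpl; Cring. Qed.

Lemma truncS N a : trunc (S N) a = sadd (trunc N a) (sscal (a (S N)) (delta (S N))).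
Proof.
  extensionality k. unfold trunc, sscal, sadd, delta.
  destruct (Nat.leb_spec k (S N)), (Nat.leb_spec k N); dcases; Cring.
Qed.

Lemma psum_tail N a M : psum (tail N a) M = tailsum a N M.
Proof.
  unfold psum, tailsum. apply sum_eq. intros i _. unfold tail. destruct (Nat.leb i N); [apply Cnorm_C0|reflexivity].
Qed.

Lemma psum_two a n : (0 < n)%nat -> Cnorm (a 0%nat) + Cnorm (a n) <= psum a n.
Proof.
  intro hn. destruct n; [lia|]. clear hn. unfold psum; simpl.
  pose proof (sum_term (fun k => Cnorm (a k)) 0 n (fun _ => Cnorm_ge0 _) ltac:(lia)). simpl in H. lra.
Qed.

Lemma char_forward phi : character phi ->
  agree phi (phin 0) \/ exists n, (0 < n)%nat /\ agree phi (fun a => Cadd (phin 0 a) (phin n a)).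
Proof.
  intros [hadd [hsc [hmul [[K hK] [a0 [ha0 hne]]]]]].
  assert (he : phi (delta 0) = C1).
  { apply (Cmul_cancel _ (phi a0)); auto. rewrite <- hmul by (auto; apply l1_delta).
    rewrite lmul_e_l; reflexivity. }
  assert (h01 : forall k, phi (delta k) = C0 \/ phi (delta k) = C1).
  { intro k. pose proof (hmul (delta k) (delta k) (l1_delta k) (l1_delta k)) as h.
    rewrite lmul_dd in h. set (c := phi (delta k)) in *.
    assert (Cmul c (Csub c C1) = C0) by (replace (Cmul c (Csub c C1)) with (Csub (Cmul c c) c) by Cring;
      rewrite <- h; Cring).
    destruct (Cmul_integral _ _ H); [left; auto|right; apply Csub_eq0; auto]. }
  destruct (classic (exists n, (0 < n)%nat /\ phi (delta n) = C1)) as [[n [hn h1]]|hno].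
  - right. exists n. split; auto. intros a ha. unfold phin.
    pose proof (hmul a (delta n) ha (l1_delta n)) as h. rewrite lmul_a_dn in h by auto.
    rewrite hsc in h by apply l1_delta. rewrite h1 in h.
    transitivity (Cmul (phi a) C1); [Cring|]. rewrite <- h. Cring.
  - left. assert (hz : forall n, (0 < n)%nat -> phi (delta n) = C0).
    { intros n hn. destruct (h01 n); auto. exfalso; apply hno; eauto. }
    intros a ha. unfold phin.
    assert (ht : forall N, phi (trunc N a) = a 0%nat).
    { induction N.
      - rewrite trunc0, hsc, he by apply l1_delta. Cring.
      - rewrite truncS, hadd, IHN, hsc, hz; try lia; try apply l1_delta; try apply l1_sscal, l1_delta; try apply l1_trunc, ha.
        Cring. }
    assert (hb : forall eps, eps > 0 -> Cnorm (Csub (phi a) (a 0%nat)) <= Rabs K * eps).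
    { intros eps he'. destruct (tail_small a ha eps he') as [i hi].
      assert (e : phi a = Cadd (a 0%nat) (phi (tail i a))).
      { rewrite (split_at i a) at 1. rewrite hadd by (apply l1_trunc || apply l1_tail; exact ha).
        rewrite ht; reflexivity. }
      rewrite e. replace (Csub (Cadd (a 0%nat) (phi (tail i a))) (a 0%nat)) with (phi (tail i a)) by Cring.
      eapply Rle_trans. apply hK, l1_tail, ha.
      assert (l1norm (tail i a) <= eps) by (apply l1norm_le; intro N; rewrite psum_tail; apply hi; lia).
      destruct (l1norm_spec _ (l1_tail i a ha)) as [h0 _].
      destruct (Rle_dec 0 K). rewrite Rabs_right by lra. nra.
      rewrite Rabs_left by lra. nra. }
    apply Csub_eq0, Cnorm_eq0.
    pose proof (Cnorm_ge0 (Csub (phi a) (a 0%nat))).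
    destruct (Rle_lt_or_eq_dec _ _ H) as [hp|]; [|auto].
    exfalso. set (d := Cnorm (Csub (phi a) (a 0%nat))) in *.
    pose proof (Rabs_pos K).
    specialize (hb (d / (2 * (Rabs K + 1)))).
    assert (d / (2 * (Rabs K + 1)) > 0) by (apply Rdiv_lt_0_compat; lra).
    specialize (hb H1).
    assert (Rabs K * (d / (2 * (Rabs K + 1))) < d).
    { unfold Rdiv. rewrite <- Rmult_assoc. apply (Rmult_lt_reg_r (2 * (Rabs K + 1))). lra.
      rewrite Rmult_assoc, Rinv_l by lra. nra. }
    lra.
Qed.

Lemma char_backward phi :
  (agree phi (phin 0) \/ exists n, (0 < n)%nat /\ agree phi (fun a => Cadd (phin 0 a) (phin n a))) ->
  character phi.
Proof.
  intros [h|[n [hn h]]]; unfold agree, phin in h.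
  - split; [|split; [|split; [|split]]].
    + intros a b ha hb. rewrite !h by (auto; apply l1_sadd; auto). reflexivity.
    + intros c a ha. rewrite !h by (auto; apply l1_sscal; auto). reflexivity.
    + intros a b ha hb. rewrite !h by (auto; apply l1_lmul; auto). reflexivity.
    + exists 1. intros a ha. rewrite h by auto. rewrite Rmult_1_l. apply l1norm_term, ha.
    + exists (delta 0). split; [apply l1_delta|]. rewrite h by apply l1_delta. unfold delta; simpl.
      intro e. apply (f_equal re) in e. simpl in e. lra.
  - split; [|split; [|split; [|split]]].
    + intros a b ha hb. rewrite !h by (auto; apply l1_sadd; auto). unfold sadd; Cring.
    + intros c a ha. rewrite !h by (auto; apply l1_sscal; auto). unfold sscal; Cring.
    + intros a b ha hb. rewrite !h by (auto; apply l1_lmul; auto). destruct n; [lia|]. unfold lmul. Cring.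
    + exists 1. intros a ha. rewrite h by auto. rewrite Rmult_1_l.
      eapply Rle_trans. apply Cnorm_triangle. eapply Rle_trans. apply psum_two, hn.
      apply l1norm_spec, ha.
    + exists (delta 0). split; [apply l1_delta|]. rewrite h by apply l1_delta. unfold delta; simpl.
      destruct n; [lia|]. simpl.
      intro e. apply (f_equal re) in e. simpl in e. lra.
Qed.

Lemma Cnorm_sub_sym z w : Cnorm (Csub z w) = Cnorm (Csub w z).
Proof. replace (Csub z w) with (Copp (Csub w z)) by Cring. apply Cnorm_opp. Qed.

Lemma amen_seq y n : (0 < n)%nat ->
  ssub (lmul (delta n) y) (sscal (phin 0 (delta n)) y) = sscal (Cadd (y 0%nat) (y n)) (delta n).
Proof.
  intro hn. rewrite lmul_dn_a by auto. extensionality k. unfold ssub, sscal, phin, delta.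
  destruct n; [lia|]. simpl. Cring.
Qed.

Lemma psum_half y N : (forall n, (0 < n <= N)%nat -> 1/2 <= Cnorm (y n)) -> INR N / 2 <= psum y N.
Proof.
  intro h. assert (forall M, (M <= N)%nat -> INR M / 2 <= psum y M).
  { induction M; intro hM.
    - simpl. pose proof (psum_ge0 y 0). lra.
    - rewrite S_INR. unfold psum; simpl. fold (psum y M).
      specialize (IHM ltac:(lia)). specialize (h (S M) ltac:(lia)). lra. }
  apply H; lia.
Qed.

Theorem not_amenable : ~ left_phi_amenable (phin 0).
Proof.
  intros [D [le [x [[[d0] [hrefl [htrans hup]]] [[K hK] [hnet hphi]]]]]].
  assert (main : forall N, exists i0, forall i, le i0 i ->
    Cnorm (Csub (x i 0%nat) C1) < 1/4 /\ forall n, (0 < n <= N)%nat -> Cnorm (Cadd (x i 0%nat) (x i n)) < 1/4).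
  { induction N.
    - destruct (hphi (1/4)) as [i0 hi]; [lra|]. exists i0. intros i hi'. split; [|intros; lia].
      specialize (hi i hi'). unfold phin in hi. rewrite Rabs_right in hi by (apply Rle_ge, Cnorm_ge0). exact hi.
    - destruct IHN as [i0 hi0].
      destruct (hnet (delta (S N)) (l1_delta _) (1/4)) as [j0 hj0]; [lra|].
      destruct (hup i0 j0) as [k [hk1 hk2]]. exists k. intros i hi.
      destruct (hi0 i (htrans _ _ _ hk1 hi)) as [h1 h2]. split; auto.
      intros n hn. destruct (Nat.eq_dec n (S N)).
      + subst n. specialize (hj0 i (htrans _ _ _ hk2 hi)). cbv beta in hj0.
        rewrite amen_seq in hj0 by lia.
        rewrite Rabs_right in hj0 by (apply Rle_ge, l1norm_spec, l1_sscal, l1_delta).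
        eapply Rle_lt_trans; [|exact hj0].
        eapply Rle_trans; [|apply (l1norm_term _ (S N)), l1_sscal, l1_delta].
        unfold sscal, delta. rewrite Nat.eqb_refl, Cnorm_mul, Cnorm_C1. lra.
      + apply h2. lia. }
  destruct (INR_archimed (1/2) K) as [N hN]; [lra|].
  destruct (main N) as [i0 hi0]. destruct (hi0 i0 (hrefl i0)) as [h1 h2].
  destruct (hK i0) as [hl hle].
  assert (INR N / 2 <= psum (x i0) N).
  { apply psum_half. intros n hn. specialize (h2 n hn).
    pose proof (Cnorm_sub_tri C1 (x i0 0%nat)). rewrite Cnorm_C1, Cnorm_sub_sym in H.
    pose proof (Cnorm_sub_tri (x i0 0%nat) (Copp (x i0 n))). rewrite Cnorm_opp in H0.
    replace (Csub (x i0 0%nat) (Copp (x i0 n))) with (Cadd (x i0 0%nat) (x i0 n)) in H0 by Cring.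
    lra. }
  pose proof (proj2 (l1norm_spec _ hl) N). lra.
Qed.

Definition G (p : nat) : tens := fun m n => if andb (Nat.eqb n 0) (Nat.eqb m p) then C1 else C0.
Definition Z : tens := fun _ _ => C0.

Lemma G_bd p : boundedT (G p) 1.
Proof. intros m n. unfold G. destruct (andb _ _); [rewrite Cnorm_C1|rewrite Cnorm_C0]; lra. Qed.

Lemma pistar_G0 : pistar (phin 0) = G 0.
Proof.
  extensionality m; extensionality n. unfold pistar, phin, G, lmul, delta.
  dcases; simpl; Cring.
Qed.

Lemma Z_scal : Z = tscal C0 (G 0).
Proof. extensionality m; extensionality n. unfold Z, tscal. Cring. Qed.

Lemma ract_G p : (0 < p)%nat -> dual_ract (G p) (delta p) = tadd (G 0) (G p).
Proof.
  intro hp. extensionality m; extensionality n. unfold dual_ract.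
  rewrite (csum_single _ p).
  2:{ intros q hq. unfold G. destruct (Nat.eqb_spec q p); [contradiction|]. rewrite Bool.andb_false_r. Cring. }
  destruct p as [|p]; [lia|]. unfold G, tadd, lmul, delta. cbv beta iota.
  dcases; simpl; Cring.
Qed.

Lemma lact_G p : (0 < p)%nat -> dual_lact (delta p) (G p) = Z.
Proof.
  intro hp. extensionality m; extensionality n. unfold dual_lact.
  rewrite (csum_single _ 0).
  2:{ intros q hq. unfold G. destruct (Nat.eqb_spec q 0); [contradiction|]. simpl. Cring. }
  destruct p as [|p]; [lia|]. unfold G, Z, lmul, delta. simpl. Cring.
Qed.

Fixpoint H (N : nat) : tens := match N with O => Z | S N => tadd (H N) (G (S N)) end.

Lemma H_inv N : forall m n, ((N < m)%nat -> H N m n = C0) /\ (H N m n = C0 \/ H N m n = C1).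
Proof.
  induction N; intros m n; simpl.
  - unfold Z; auto.
  - destruct (IHN m n) as [h1 h2]. unfold tadd, G.
    destruct (Nat.eqb_spec n 0), (Nat.eqb_spec m (S N)); simpl.
    + subst. rewrite h1 by lia. split; [intros; lia|right; Cring].
    + split; [intros; rewrite h1 by lia; Cring|destruct h2 as [e'|e']; rewrite e'; [left|right]; Cring].
    + split; [intros; rewrite h1 by lia; Cring|destruct h2 as [e'|e']; rewrite e'; [left|right]; Cring].
    + split; [intros; rewrite h1 by lia; Cring|destruct h2 as [e'|e']; rewrite e'; [left|right]; Cring].
Qed.

Lemma H_bd N : boundedT (H N) 1.
Proof.
  intros m n. destruct (proj2 (H_inv N m n)) as [e|e]; rewrite e; [rewrite Cnorm_C0|rewrite Cnorm_C1]; lra.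
Qed.

Theorem not_biflat : ~ phi_biflat (phin 0).
Proof.
  intros [rho [hval [_ [_ [[K hK] [hl [hr hpi]]]]]]].
  set (F := rho (delta 0)).
  destruct (hval (delta 0) (l1_delta 0)) as [Fadd Fsc]. fold F in Fadd, Fsc.
  assert (hG0 : F (G 0) = C1).
  { unfold F. rewrite <- pistar_G0, hpi by apply l1_delta. reflexivity. }
  assert (hZ : F Z = C0).
  { rewrite Z_scal, (Fsc _ _ 1 (G_bd 0)). Cring. }
  assert (hGp : forall p, (0 < p)%nat -> F (G p) = mkC (-1) 0).
  { intros p hp.
    assert (e1 : rho (delta p) (G p) = F (dual_ract (G p) (delta p))).
    { pose proof (hl (delta p) (delta 0) (l1_delta _) (l1_delta _) (G p) 1 (G_bd p)) as e.
      rewrite lmul_e_r in e. exact e. }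
    assert (e2 : rho (delta p) (G p) = F (dual_lact (delta p) (G p))).
    { pose proof (hr (delta 0) (delta p) (l1_delta _) (l1_delta _) (G p) 1 (G_bd p)) as e.
      rewrite lmul_e_l in e. exact e. }
    rewrite ract_G in e1 by auto. rewrite lact_G in e2 by auto.
    rewrite e1, hZ, (Fadd _ _ 1 1 (G_bd 0) (G_bd p)), hG0 in e2.
    apply Csub_eq0. replace (Csub (F (G p)) (mkC (-1) 0)) with (Cadd C1 (F (G p))) by Cring. exact e2. }
  assert (hH : forall N, F (H N) = mkC (- INR N) 0).
  { induction N; simpl H.
    - rewrite hZ. Cring.
    - rewrite (Fadd _ _ 1 1 (H_bd N) (G_bd (S N))), IHN, hGp by lia. apply Cext; unfold Cadd; cbn [re im]; rewrite ?S_INR; ring. }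
  destruct (INR_archimed 1 (K * l1norm (delta 0))) as [N hN]; [lra|].
  pose proof (hK (delta 0) (H N) 1 (l1_delta 0) (H_bd N)). fold F in H0. rewrite hH in H0.
  unfold Cnorm in H0; simpl in H0.
  replace (- INR N * - INR N + 0 * 0) with (INR N * INR N) in H0 by ring.
  rewrite sqrt_square in H0 by apply pos_INR. lra.
Qed.

Definition colT (c : C) (v : seqC) : tens := fun p q => if Nat.eqb q 0 then Cmul c (v p) else C0.

Lemma sum_scal (f : nat -> R) a N : sum_f_R0 (fun k => a * f k) N = a * sum_f_R0 f N.
Proof. induction N; simpl; [ring|rewrite IHN; ring]. Qed.

Lemma sq_colT c v N : sq_sum (colT c v) N = Cnorm c * psum v N.
Proof.
  rewrite sq_sum_col.
  - unfold psum. rewrite <- sum_scal. apply sum_eq. intros. unfold colT. simpl. apply Cnorm_mul.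
  - intros m n hn. unfold colT. destruct (Nat.eqb_spec n 0); [lia|apply Cnorm_C0].
Qed.

Lemma lmul_col a c v m : lmul a (fun p => if Nat.eqb 0 0 then Cmul c (v p) else C0) m = Cmul c (lmul a v m).
Proof. destruct m; simpl; Cring. Qed.

Lemma piA_colT c v : piA (colT c v) = sscal c v.
Proof.
  extensionality k. unfold piA.
  assert (e : (fun m => csum (fun n => Cmul (colT c v m n) (lmul (delta m) (delta n) k)))
            = fun m => Cmul (Cmul c (v m)) (delta m k)).
  { extensionality m. rewrite (csum_single _ 0).
    - rewrite lmul_e_r. unfold colT. simpl. reflexivity.
    - intros n hn. unfold colT. destruct (Nat.eqb_spec n 0); [lia|]. Cring. }
  rewrite e. rewrite (csum_single _ k).
  - unfold delta, sscal. rewrite Nat.eqb_refl. Cring.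
  - intros m hm. unfold delta. destruct (Nat.eqb_spec k m); [lia|]. Cring.
Qed.

Lemma sum_nonpos (f : nat -> R) N : (forall k, f k <= 0) -> sum_f_R0 f N <= 0.
Proof. intro h; induction N; simpl; [apply h|specialize (h (S N)); lra]. Qed.

Lemma build (phi psi : functional) (w : nat -> seqC) (W : nat -> R) (Kp : R) :
  (forall x, l1 x -> phi x = psi x) ->
  (forall x y, psi (sadd x y) = Cadd (psi x) (psi y)) ->
  (forall c x, psi (sscal c x) = Cmul c (psi x)) ->
  (forall u v, psi (lmul u v) = Cmul (psi u) (psi v)) ->
  (forall x, l1 x -> Cnorm (psi x) <= Kp * l1norm x) ->
  (forall i N, psum (w i) N <= W i) ->
  (forall i, psi (w i) = C1) ->
  (forall a, l1 a -> forall eps, eps > 0 -> exists i0, forall i, (i0 <= i)%nat -> forall N,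
     sum_f_R0 (fun m => Cnorm (Csub (lmul a (w i) m) (Cmul (psi a) (w i m)))) N <= eps) ->
  approx_left_phi_biprojective phi.
Proof.
  intros hag hpadd hpsc hpmul hpb hW hw1 hcond.
  assert (hW0 : forall i, 0 <= W i) by (intro i; pose proof (psum_ge0 (w i) 0); pose proof (hW i 0%nat); lra).
  assert (hwl : forall i, l1 (w i)) by (intro i; exists (W i); apply hW).
  exists nat, le, (fun i x => colT (psi x) (w i)).
  split; [|split].
  - split; [constructor; exact 0%nat|split; [intro; lia|split; [intros; lia|]]].
    intros i j. exists (Nat.max i j). lia.
  - intro i. split; [|split; [|split]].
    + intros x hx. exists (Cnorm (psi x) * W i). intro N. rewrite sq_colT.
      apply Rmult_le_compat_l; [apply Cnorm_ge0|apply hW].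
    + intros x y _ _. extensionality p; extensionality q. unfold colT, tadd.
      destruct (Nat.eqb q 0); [rewrite hpadd|]; Cring.
    + intros z x _. extensionality p; extensionality q. unfold colT, tscal.
      destruct (Nat.eqb q 0); [rewrite hpsc|]; Cring.
    + exists (Kp * W i). intros x hx.
      destruct (normT_le (colT (psi x) (w i)) (Cnorm (psi x) * W i)) as [_ h].
      { intro N. rewrite sq_colT. apply Rmult_le_compat_l; [apply Cnorm_ge0|apply hW]. }
      specialize (hpb x hx). specialize (hW0 i). nra.
  - intros a x ha hx. split; [|split].
  + apply net_nat. intros eps he.
    set (c := Cnorm (psi x)). assert (hc : 0 <= c) by apply Cnorm_ge0.
    destruct (hcond a ha (eps / (c + 1))) as [i0 hi0]. { apply Rdiv_lt_0_compat; lra. }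
    exists i0. intros i hi.
    apply normT_le. intro N. rewrite sq_sum_col.
    ++ eapply Rle_trans with (c * (eps / (c + 1))).
      ** eapply Rle_trans with (c * sum_f_R0 (fun m => Cnorm (Csub (lmul a (w i) m) (Cmul (psi a) (w i m)))) N).
        --- rewrite <- sum_scal. apply Req_le, sum_eq. intros m _.
           unfold tsub, tlact, colT. rewrite lmul_col. simpl. rewrite hpmul.
           unfold c. rewrite <- Cnorm_mul. f_equal. Cring.
        --- apply Rmult_le_compat_l; auto.
      ** unfold Rdiv. rewrite <- Rmult_assoc. apply (Rmult_le_reg_r (c + 1)); [lra|].
        rewrite Rmult_assoc, Rinv_l by lra. nra.
    ++ intros m n hn. unfold tsub, tlact, colT. destruct (Nat.eqb_spec n 0); [lia|].
      replace (Csub (lmul a (fun p => C0) m) C0) with C0 by (destruct m; simpl; Cring). apply Cnorm_C0.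
  + apply net_nat. intros eps he. exists 0%nat. intros i _.
    match goal with |- 0 <= normT ?u <= _ => destruct (normT_le u 0) as [h1 h2]; [|lra] end.
    intro N. unfold sq_sum. apply sum_nonpos. intro m. apply sum_nonpos. intro n.
    unfold tsub, tscal, colT. rewrite hag by auto.
    destruct (Nat.eqb n 0); [rewrite hpmul|]; 
    (replace (Csub _ _) with C0 by Cring); rewrite Cnorm_C0; lra.
  + intros eps he. exists 0%nat. intros i _. rewrite piA_colT.
    rewrite !hag by (auto; apply l1_sscal; auto). rewrite hpsc, hw1.
    replace (Csub (Cmul (psi x) C1) (psi x)) with C0 by Cring. rewrite Cnorm_C0, Rabs_R0. lra.
Qed.

Lemma psum_count v N : (forall k, Cnorm (v k) <= 1) -> psum v N <= INR (S N).
Proof.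
  intro h. induction N.
  - unfold psum; simpl. specialize (h 0%nat). lra.
  - unfold psum in *; simpl sum_f_R0. rewrite S_INR. specialize (h (S N)). lra.
Qed.

Lemma psum_fin v N0 : (forall k, Cnorm (v k) <= 1) -> (forall k, (N0 < k)%nat -> v k = C0) ->
  forall N, psum v N <= INR (S N0).
Proof.
  intros h1 h2 N. destruct (Compare_dec.le_lt_dec N N0).
  - eapply Rle_trans. apply psum_count, h1. apply le_INR. lia.
  - assert (HH : psum v N = psum v N0).
    { induction l.
      - unfold psum; simpl. rewrite h2, Cnorm_C0 by lia. ring.
      - unfold psum in *; simpl. rewrite IHl, h2, Cnorm_C0 by lia. ring. }
    rewrite HH. apply psum_count, h1.
Qed.

Definition mi (i : nat) : seqC := fun p => if Nat.eqb p 0 then C1 else if Nat.leb p i then Copp C1 else C0.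

Lemma case0 phi : agree phi (phin 0) -> approx_left_phi_biprojective phi.
Proof.
  intro h. apply (build phi (phin 0) mi (fun i => INR (S i)) 1); unfold phin.
  - exact h.
  - reflexivity.
  - reflexivity.
  - reflexivity.
  - intros x hx. rewrite Rmult_1_l. apply l1norm_term, hx.
  - intros i. apply psum_fin.
    + intro k. unfold mi. destruct (Nat.eqb k 0); [rewrite Cnorm_C1; lra|].
      destruct (Nat.leb k i); [rewrite Cnorm_opp, Cnorm_C1|rewrite Cnorm_C0]; lra.
    + intros k hk. unfold mi. destruct (Nat.eqb_spec k 0); [lia|]. destruct (Nat.leb_spec k i); [lia|auto].
  - reflexivity.
  - intros a ha eps he. destruct (tail_small a ha eps he) as [i0 hi0]. exists i0. intros i hi N.
    eapply Rle_trans; [|apply (hi0 i hi N)]. unfold tailsum. apply sum_le. intro k.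
    replace (Csub (lmul a (mi i) k) (Cmul (a 0%nat) (mi i k))) with (if Nat.leb k i then C0 else a k).
    + destruct (Nat.leb k i); [rewrite Cnorm_C0|]; lra.
    + unfold mi, lmul. destruct k; cbv beta iota; [Cring|]. destruct (Nat.leb (S k) i); Cring.
Qed.

Lemma casen phi n : (0 < n)%nat -> agree phi (fun a => Cadd (phin 0 a) (phin n a)) -> approx_left_phi_biprojective phi.
Proof.
  intros hn h. apply (build phi (fun a => Cadd (phin 0 a) (phin n a)) (fun _ => delta n) (fun _ => INR (S n)) 1); unfold phin.
  - exact h.
  - intros; unfold sadd; Cring.
  - intros; unfold sscal; Cring.
  - intros u v. destruct n; [lia|]. simpl. Cring.
  - intros x hx. rewrite Rmult_1_l. eapply Rle_trans. apply Cnorm_triangle. eapply Rle_trans. apply psum_two, hn.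
    apply l1norm_spec, hx.
  - intros i. apply psum_fin.
    + intro k. unfold delta. destruct (Nat.eqb k n); [rewrite Cnorm_C1|rewrite Cnorm_C0]; lra.
    + intros k hk. unfold delta. destruct (Nat.eqb_spec k n); [lia|auto].
  - intros i. unfold delta. destruct n; [lia|]. simpl. rewrite Nat.eqb_refl. Cring.
  - intros a ha eps he. exists 0%nat. intros i _ N. rewrite lmul_a_dn by auto.
    apply Rle_trans with 0; [|lra]. apply sum_nonpos. intro k. unfold sscal.
    replace (Csub _ _) with C0 by Cring. rewrite Cnorm_C0; lra.
Qed.

Theorem mainTheorem19 :
  (forall phi : functional, character phi <->
     (agree phi (phin 0) \/
      exists n, (0 < n)%nat /\ agree phi (fun a => Cadd (phin 0 a) (phin n a)))) /\
  ~ left_phi_amenable (phin 0) /\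
  ~ phi_biflat (phin 0) /\
  approx_left_character_biprojective.
Proof.
  split; [|split; [exact not_amenable|split; [exact not_biflat|]]].
  - intro phi; split; [apply char_forward|apply char_backward].
  - intros phi hc. destruct (char_forward phi hc) as [h|[n [hn h]]].
    + apply case0, h.
    + apply (casen phi n hn h).
Qed.
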